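(* There exists a function $g:(0,\infty)\to(0,\infty)$ such that for every $\varepsilon>0$ and all integers $n\ge 1$ and $k\ge 0$ there exists a tournament tree $T$ with exactly $n$ distinct seed position names and of height at most $\lceil (1+\varepsilon)\log_2 n\rceil+g(\varepsilon^{-1})\cdot k$ that is robust for $(n,k)$.
   Context: A tournament tree is a rooted full binary tree (every internal vertex has exactly two children) whose leaves are labeled with binary strings (seed position names); different leaves may share a name. Height is the maximum number of edges on a root-to-leaf path. A winner function on a player set $N$ is $w:N\times N\to N$ with $w(i,j)\in\{i,j\}$; it exhibits a strongest player $i_w$ if $w(i_w,j)=w(j,i_w)=i_w$ for all $j\in N$. A seeding is a bijection $\sigma$ from $N$ onto the set of seed position names. Conduction of $(N,T,w,\sigma)$: each leaf named $x$ is occupied by $\sigma^{-1}(x)$; at each internal vertex $v$ with children occupied by $i,j$, one of $i,j$ is promoted to $v$, normally $w(i,j)$; the game at $v$ is manipulated if the other one is promoted. The player at the root wins. $T$ is robust for $(n,k)$ if for every set $N$ of $n$ players, every winner function $w$ on $N$ exhibiting a strongest player $i_w$, and every seeding $\sigma$, the player $i_w$ wins $(N,T,w,\sigma)$ whenever every leaf-to-root path of $T$ contains at most $k$ vertices whose game is manipulated. *)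

(* Defs.v *)
From mathcomp Require Import all_boot.
From Stdlib Require Import Reals.

Set Implicit Arguments.
Unset Strict Implicit.
Unset Printing Implicit Defensive.

(* Tournament trees: rooted full binary trees with leaves labelled by
   binary strings (seed position names). *)
Inductive ttree : Type :=
| Leaf of seq bool
| Node of ttree & ttree.

Fixpoint height (t : ttree) : nat :=
  match t with
  | Leaf _ => 0
  | Node l r => (maxn (height l) (height r)).+1
  end.

Fixpoint leaves (t : ttree) : seq (seq bool) :=
  match t with
  | Leaf x => [:: x]
  | Node l r => leaves l ++ leaves r
  end.

Definition names (t : ttree) : seq (seq bool) := undup (leaves t).

Section Conduction.
Variable N : finType.

Definition winner_fun (w : N -> N -> N) : Prop :=
  forall i j, w i j = i \/ w i j = j.

Definition strongest (w : N -> N -> N) (iw : N) : Prop :=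
  forall j, w iw j = iw /\ w j iw = iw.

Definition seeding (t : ttree) (sigma : N -> seq bool) : Prop :=
  injective sigma /\ (forall i, sigma i \in names t) /\
  (forall x, x \in names t -> exists i, sigma i = x).

(* Vertices of a tree are addressed by their path from the root
   (false = left child, true = right child).  A manipulation pattern
   M says for each internal vertex whether its game is manipulated. *)

(* Conduction: [d] is a default player, only used for labels outside
   the names of the tree (never happens when sigma is a seeding). *)
Fixpoint conduct (w : N -> N -> N) (sigma : N -> seq bool) (d : N)
    (M : seq bool -> bool) (pos : seq bool) (t : ttree) : N :=
  match t with
  | Leaf x => odflt d [pick i | sigma i == x]
  | Node l r =>
      let i := conduct w sigma d M (rcons pos false) l in
      let j := conduct w sigma d M (rcons pos true) r in
      if M pos then (if w i j == i then j else i) else w i j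
  end.

Fixpoint max_manip (M : seq bool -> bool) (pos : seq bool) (t : ttree) : nat :=
  match t with
  | Leaf _ => 0
  | Node l r =>
      M pos + maxn (max_manip M (rcons pos false) l)
                   (max_manip M (rcons pos true) r)
  end.

End Conduction.

Definition robust (n k : nat) (t : ttree) : Prop :=
  forall (N : finType), #|N| = n ->
  forall (w : N -> N -> N), winner_fun w ->
  forall iw : N, strongest w iw ->
  forall sigma : N -> seq bool, seeding t sigma ->
  forall M : seq bool -> bool, max_manip M [::] t <= k ->
  conduct w sigma iw M [::] t = iw.

Definition log2 (x : R) : R := (ln x / ln 2)%R.
(* ceiling: ceil x = - floor (- x), floor y = up y - 1 *)
Definition ceilR (x : R) : Z := (- (up (- x) - 1))%Z.

(* Main.v *)
Require Import Defs.
From mathcomp Require Import all_boot.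
From Stdlib Require Import Reals.
Open Scope R_scope.
From mathcomp Require Import zify.
From Stdlib Require Import Lia Lra ZArith.
Close Scope R_scope.
Local Notation "x ^ y" := (expn x y) : nat_scope.


Fixpoint hd (u v : seq bool) : nat :=
  match u, v with
  | a :: u', b :: v' => (a != b) + hd u' v'
  | _, _ => 0
  end.

Lemma hd_sym u v : hd u v = hd v u.
Proof. elim: u v => [|a u IH] [|b v] //=. by rewrite IH eq_sym. Qed.

Lemma hd_refl u : hd u u = 0.
Proof. by elim: u => //= a u ->; rewrite eqxx. Qed.

Lemma hd_tri u v w : size u = size v -> size v = size w -> hd u w <= hd u v + hd v w.
Proof.
elim: u v w => [|a u IH] [|b v] [|c w] //= e1 e2.
have := IH v w (eq_add_S _ _ e1) (eq_add_S _ _ e2). case: a; case: b; case: c => /=; lia.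
Qed.

Lemma hd_rcons u v a b : size u = size v -> hd (rcons u a) (rcons v b) = hd u v + (a != b).
Proof.
elim: u v => [|x u IH] [|y v] //= e; first by rewrite addn0.
by rewrite IH ?addnA //; case: e.
Qed.

Fixpoint words (h : nat) : seq (seq bool) :=
  match h with
  | 0 => [:: [::]]
  | h'.+1 => map (cons false) (words h') ++ map (cons true) (words h')
  end.

Lemma size_words h : size (words h) = 2 ^ h.
Proof. elim: h => //= h IH. by rewrite size_cat !size_map IH expnS mul2n addnn. Qed.

Lemma mem_words h w : (w \in words h) = (size w == h).
Proof.
elim: h w => [|h IH] [|b w] //=; rewrite mem_cat.
- by apply/negbTE; rewrite negb_or; apply/andP; split; apply/mapP => -[].
- apply/idP/idP.
  + by case/orP => /mapP [w' Hw' [_ ->]]; rewrite /= eqSS -IH.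
  + move=> Hs; case: b; apply/orP; [right|left]; apply/mapP; exists w => //; by rewrite IH.
Qed.

Fixpoint V (h r : nat) : nat :=
  match h with
  | 0 => 1
  | h'.+1 => V h' r + (if r is r'.+1 then V h' r' else 0)
  end.

Lemma V0 h : V h 0 = 1.
Proof. by elim: h => //= h ->. Qed.

Lemma ball_count h c r : size c = h ->
  count (fun w => hd c w <= r) (words h) <= V h r.
Proof.
elim: h c r => [|h IH] [|b c] r //= Hc; case: Hc => Hc.
rewrite count_cat !count_map.
have E1 : forall x, count (preim (cons x) (fun w => hd (b :: c) w <= r)) (words h)
            = count (fun w => (b != x) + hd c w <= r) (words h).
  by move=> x; apply: eq_count => w.
rewrite !E1; clear E1.
have A0 : count (fun w => 0 + hd c w <= r) (words h) <= V h r.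
  by rewrite (@eq_count _ _ (fun w => hd c w <= r)) ?IH.
have A1 : count (fun w => 1 + hd c w <= r) (words h) <= (if r is r'.+1 then V h r' else 0).
  case: r {A0} => [|r].
    by rewrite (@eq_count _ _ pred0) ?count_pred0 // => w; rewrite add1n.
  by rewrite (@eq_count _ _ (fun w => hd c w <= r)) ?IH // => w; rewrite add1n ltnS.
case: b => /=.
- by rewrite addnC; apply: leq_add.
- by apply: leq_add.
Qed.


Lemma V_gt0 h r : 0 < V h r.
Proof. elim: h r => //= h IH r; by rewrite ltn_addr. Qed.

Lemma V_bound B h r : 0 < B -> V h r * B ^ h <= B ^ r * (B + 1) ^ h.
Proof.
move=> B0; elim: h r => [|h IH] r /=; first by rewrite !expn0 !muln1 expn_gt0 B0.
case: r => [|r].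
- have := IH 0; rewrite !expn0 !mul1n addn0 !expnS => H. nia.
- rewrite mulnDl !expnS.
  have H1 := IH r.+1. have H2 := IH r.
  rewrite [in X in X <= _]mulnCA [in X in _ + X <= _]mulnCA.
  apply: (@leq_trans (B * (B ^ r.+1 * (B + 1) ^ h) + B * (B ^ r * (B + 1) ^ h))).
    by apply: leq_add; apply: leq_mul.
  rewrite expnS; nia.
Qed.

Lemma pow_step B j : j <= B -> (B + 1) ^ j * (B - j) <= B ^ j.+1.
Proof.
elim: j => [|j IH] Hj; first by rewrite expn0 mul1n subn0 expn1.
have := IH (ltnW Hj).
rewrite !expnS => H.
have E : (B + 1) * (B - j.+1) <= B * (B - j) by nia.
have H1 := leq_mul (leqnn ((B+1)^j)) E.
have H2 := leq_mul (leqnn B) H.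
set P := (B+1)^j in H H1 H2 *.
set Q := B ^ j in H H2 *.
rewrite (mulnC (B+1) P) -mulnA; apply: leq_trans H1 _.
by rewrite mulnCA.
Qed.

Lemma pow_small J j : 0 < J -> j <= J -> (2 * J + 1) ^ j <= 2 * (2 * J) ^ j.
Proof.
move=> J0 Hj.
have := @pow_step (2 * J) j (leq_trans Hj (leq_pmull J (isT : 0 < 2))).
rewrite expnS => H.
have HJ : J <= 2 * J - j by lia.
have : (2 * J + 1) ^ j * J <= 2 * (2 * J) ^ j * J.
  apply: leq_trans (leq_mul (leqnn _) HJ) _.
  apply: leq_trans H _. nia.
by rewrite leq_pmul2r.
Qed.

Lemma pow_block J q rem : 0 < J -> rem <= J ->
  (2 * J + 1) ^ (q * J + rem) <= 2 ^ q.+1 * (2 * J) ^ (q * J + rem).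
Proof.
move=> J0 Hr; elim: q => [|q IH].
  by rewrite mul0n add0n expn1; apply: pow_small.
rewrite (_ : q.+1 * J + rem = J + (q * J + rem)); last by rewrite mulSn addnA.
have H1 := @pow_small J J J0 (leqnn J).
rewrite expnD [in X in _ <= X]expnD [in X in _ <= X]expnS.
apply: leq_trans (leq_mul H1 IH) _.
by rewrite mulnACA.
Qed.

Lemma count_has (T : eqType) (P : T -> T -> bool) (cs s : seq T) :
  count (fun w => has (fun c => P c w) cs) s <= sumn [seq count (P c) s | c <- cs].
Proof.
elim: cs => [|c cs IH] /=; first by rewrite count_pred0.
have := count_predUI (P c) (fun w => has (fun c => P c w) cs) s.
move=> E.
apply: (@leq_trans (count (predU (P c) (fun w => has (fun c0 => P c0 w) cs)) s)).
  by rewrite leq_eqVlt; apply/orP; left; apply/eqP; apply: eq_count.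
lia.
Qed.

Lemma greedy h r n : n * V h r <= 2 ^ h ->
  exists cs : seq (seq bool), size cs = n /\ uniq cs /\ all (fun c => c \in words h) cs /\
   (forall c1 c2, c1 \in cs -> c2 \in cs -> c1 != c2 -> r < hd c1 c2).
Proof.
elim: n => [|n IH] Hn.
  by exists [::]; split.
have [cs [Hs [Hu [Ha Hd]]]] : exists cs : seq (seq bool), size cs = n /\ uniq cs /\ all (fun c => c \in words h) cs /\
   (forall c1 c2, c1 \in cs -> c2 \in cs -> c1 != c2 -> r < hd c1 c2).
  by apply: IH; apply: leq_trans Hn; rewrite leq_mul2r leqnSn orbT.
have Hc : count (fun w => has (fun c => hd c w <= r) cs) (words h) < size (words h).
  apply: (@leq_trans (sumn [seq count (fun w => hd c w <= r) (words h) | c <- cs]).+1).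
    rewrite ltnS. have := @count_has _ (fun c w => hd c w <= r) cs (words h). exact.
  have : sumn [seq count (fun w => hd c w <= r) (words h) | c <- cs] <= n * V h r.
    rewrite -Hs; move: Ha; elim: (cs) => [|c cs' IH'] //= /andP [Hc Ha].
    rewrite mulSn; apply: leq_add; last by apply: IH'.
    by apply: ball_count; move: Hc; rewrite mem_words => /eqP.
  have := V_gt0 h r. rewrite size_words. move: Hn; rewrite mulSn. lia.
have : has (predC (fun w => has (fun c => hd c w <= r) cs)) (words h).
  rewrite has_count; have := count_predC (fun w => has (fun c => hd c w <= r) cs) (words h); move: Hc; lia.
case/hasP => w Hw /= Hnh.
have Hfar : forall c, c \in cs -> r < hd c w.
  move=> c Hc'; rewrite ltnNge; apply/negP => Hle; move/negP: Hnh; apply; apply/hasP; by exists c.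
exists (w :: cs); split; first by rewrite /= Hs.
split.
  rewrite /= Hu andbT; apply/negP => Hwc; have := Hfar _ Hwc; by rewrite hd_refl.
split; first by rewrite /= Hw Ha.
move=> c1 c2; rewrite !inE => /orP [/eqP -> | H1] /orP [/eqP -> | H2] Hne.
- by rewrite eqxx in Hne.
- by rewrite hd_sym; apply: Hfar.
- by apply: Hfar.
- by apply: Hd.
Qed.


Fixpoint build (lab : seq bool -> seq bool) (t : nat) (p : seq bool) : ttree :=
  match t with
  | 0 => Leaf (lab p)
  | t'.+1 => Node (build lab t' (rcons p false)) (build lab t' (rcons p true))
  end.

Lemma height_build lab t p : height (build lab t p) = t.
Proof. by elim: t p => //= t IH p; rewrite !IH maxnn. Qed.

Lemma leaves_build lab t p x : x \in leaves (build lab t p) -> exists p', x = lab p'.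
Proof.
elim: t p => [|t IH] p /=; first by rewrite inE => /eqP ->; exists p.
by rewrite mem_cat => /orP [] /IH.
Qed.

Lemma build_leaves lab t p w : size w = t -> lab (p ++ w) \in leaves (build lab t p).
Proof.
elim: t p w => [|t IH] p [|b w] //=.
- by move=> _; rewrite cats0 inE.
- case=> Hw; rewrite mem_cat -cat_rcons.
  by case: b; apply/orP; [right|left]; apply: IH.
Qed.

Lemma robust_core (N : finType) (w : N -> N -> N) (iw : N) (sigma : N -> seq bool)
  (lab : seq bool -> seq bool) (x : seq bool) (h k : nat) :
  (forall j, w iw j = iw /\ w j iw = iw) ->
  (forall i, sigma i = x -> i = iw) ->
  size x = h ->
  (forall p, size p = h -> hd x p <= k -> lab p = x) ->
  forall t p pos M, size p + t = h ->
  hd (take (size p) x) p + max_manip M pos (build lab t p) <= k ->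
  conduct w sigma iw M pos (build lab t p) = iw.
Proof.
move=> Hs Hinj Hx Hlab.
elim=> [|t IH] p pos M Hsz Hk /=.
- have Hp : size p = size x by lia.
  rewrite /= addn0 Hp take_size in Hk.
  rewrite Hlab; last by []. 2: by rewrite Hp.
  case: pickP => [i /eqP Hi|] //=.
  by apply: Hinj.
- have Hlt : size p < size x by rewrite Hx -Hsz; lia.
  have Hd : forall b, hd (take (size (rcons p b)) x) (rcons p b) =
       hd (take (size p) x) p + (nth false x (size p) != b).
    move=> b; rewrite size_rcons (take_nth false Hlt) hd_rcons //.
    by rewrite size_takel // ltnW.
  have Hsz' : forall b, size (rcons p b) + t = h by move=> b; rewrite size_rcons; lia.
  set d := hd (take (size p) x) p in Hk Hd.
  set mL := max_manip M (rcons pos false) (build lab t (rcons p false)) in Hk.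
  set mR := max_manip M (rcons pos true) (build lab t (rcons p true)) in Hk.
  case HM: (M pos) Hk => /= Hk.
  + have HL : conduct w sigma iw M (rcons pos false) (build lab t (rcons p false)) = iw.
      apply: IH => //; rewrite Hd; rewrite -/mL; case: (_ != _); lia.
    have HR : conduct w sigma iw M (rcons pos true) (build lab t (rcons p true)) = iw.
      apply: IH => //; rewrite Hd; rewrite -/mR; case: (_ != _); lia.
    by rewrite HL HR; case: ifP.
  + case Hb: (nth false x (size p)).
    * have HR : conduct w sigma iw M (rcons pos true) (build lab t (rcons p true)) = iw.
        apply: IH => //; rewrite Hd Hb /= addn0 -/mR; lia.
      by rewrite HR; case: (Hs (conduct w sigma iw M (rcons pos false) (build lab t (rcons p false)))).
    * have HL : conduct w sigma iw M (rcons pos false) (build lab t (rcons p false)) = iw.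
        apply: IH => //; rewrite Hd Hb /= addn0 -/mL; lia.
      by rewrite HL; case: (Hs (conduct w sigma iw M (rcons pos true) (build lab t (rcons p true)))).
Qed.


Lemma param_ineq D L k m h : 0 < D -> 0 < k ->
  m = (L - 1) %/ D -> h = L + m + (8 * D + 15) * k ->
  (2 * D + 3) * (2 * k) + h %/ 2 ^ (2 * D + 2) + 1 <= m + (8 * D + 15) * k.
Proof.
move=> D0 k0 Em Eh.
set J := 2 ^ (2 * D + 2).
have HJ : 2 * (D + 1) <= J by have := ltn_expl (2 * D + 2) (isT : 1 < 2); rewrite -/J; lia.
set q := h %/ J.
have Hq : q * J <= h by apply: leq_divM.
have HL : L <= D * (m + 1).
  have := ltn_ceil (L - 1) D0; rewrite -Em; lia.
have H2 : q * (2 * (D + 1)) <= (D + 1) * (m + 1 + (8 * D + 15) * k).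
  apply: leq_trans (leq_mul (leqnn q) HJ) _; apply: leq_trans Hq _; rewrite Eh; nia.
have H3 : 2 * q <= m + 1 + (8 * D + 15) * k.
  have : (D + 1) * (2 * q) <= (D + 1) * (m + 1 + (8 * D + 15) * k) by nia.
  by rewrite leq_pmul2l; last lia.
nia.
Qed.

Lemma V_small D L k m h : 0 < D ->
  m = (L - 1) %/ D -> h = L + m + (8 * D + 15) * k ->
  V h (2 * k) <= 2 ^ (m + (8 * D + 15) * k).
Proof.
move=> D0 Em Eh.
case: (posnP k) => [->|k0]; first by rewrite !muln0 V0 expn_gt0.
set J := 2 ^ (2 * D + 2).
have J0 : 0 < J by rewrite expn_gt0.
have HB : 2 * J = 2 ^ (2 * D + 3) by rewrite /J -expnS; congr (2 ^ _); lia.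
have Hh : h = h %/ J * J + h %% J := divn_eq h J.
have Hr : h %% J <= J by apply: ltnW; apply: ltn_pmod.
have J2 : 0 < 2 * J by rewrite muln_gt0 J0.
have H1 := @V_bound (2 * J) h (2 * k) J2.
have H2 := @pow_block J (h %/ J) (h %% J) J0 Hr.
rewrite -Hh in H2.
have H3 : V h (2 * k) <= (2 * J) ^ (2 * k) * 2 ^ (h %/ J).+1.
  have : V h (2 * k) * (2 * J) ^ h <= (2 * J) ^ (2 * k) * 2 ^ (h %/ J).+1 * (2 * J) ^ h.
    apply: leq_trans H1 _; rewrite -mulnA; apply: leq_mul => //.
  by rewrite leq_pmul2r // expn_gt0 J2.
apply: leq_trans H3 _.
rewrite HB -expnM -expnD leq_exp2l //.
have := @param_ineq D L k m h D0 k0 Em Eh; rewrite -/J; lia.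
Qed.


Lemma main_nat D n k : 0 < D -> 0 < n ->
  exists T, size (names T) = n /\
    height T = up_log 2 n + (up_log 2 n - 1) %/ D + (8 * D + 15) * k /\ robust n k T.
Proof.
move=> D0 n0.
set L := up_log 2 n.
set m := (L - 1) %/ D.
set h := L + m + (8 * D + 15) * k.
have HnL : n <= 2 ^ L by apply: up_logP.
have HV := @V_small D L k m h D0 erefl erefl.
have Hcount : n * V h (2 * k) <= 2 ^ h.
  have -> : 2 ^ h = 2 ^ L * 2 ^ (m + (8 * D + 15) * k) by rewrite /h -addnA expnD.
  exact: leq_mul HnL HV.
have [cs [Hs [Hu [Ha Hd]]]] := @greedy h (2 * k) n Hcount.
have Hsz : forall c, c \in cs -> size c = h.
  by move=> c Hc; move/allP: Ha => /(_ c Hc); rewrite mem_words => /eqP.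
set c0 := head [::] cs.
have c0in : c0 \in cs by rewrite /c0; move: Hs n0; case: (cs) => [|y s] /= <- // _; exact: mem_head.
set lab := fun p => head c0 [seq c <- cs | hd c p <= k].
have labin : forall p, lab p \in cs.
  move=> p; rewrite /lab; case E: [seq c <- cs | hd c p <= k] => [|y s] //=.
  have : y \in [seq c <- cs | hd c p <= k] by rewrite E inE eqxx.
  by rewrite mem_filter => /andP [].
have uniqc : forall c1 c2 p, c1 \in cs -> c2 \in cs -> size p = h -> hd c1 p <= k -> hd c2 p <= k -> c1 = c2.
  move=> c1 c2 p H1 H2 Hp K1 K2; apply/eqP; apply/negPn/negP => Hne.
  have := Hd _ _ H1 H2 Hne.
  have := @hd_tri c1 p c2 (etrans (Hsz _ H1) (esym Hp)) (etrans Hp (esym (Hsz _ H2))).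
  rewrite (hd_sym p c2); lia.
have labeq : forall x p, x \in cs -> size p = h -> hd x p <= k -> lab p = x.
  move=> x p Hx Hp Hk; rewrite /lab.
  have : x \in [seq c <- cs | hd c p <= k] by rewrite mem_filter Hk.
  case E: [seq c <- cs | hd c p <= k] => [|y s] //= _.
  have : y \in [seq c <- cs | hd c p <= k] by rewrite E inE eqxx.
  rewrite mem_filter => /andP [Hy Hyin].
  exact: (uniqc y x p).
set T := build lab h [::].
have Hnames : names T =i cs.
  move=> x; rewrite /names mem_undup; apply/idP/idP.
  - by case/leaves_build => p ->.
  - move=> Hx; have := @build_leaves lab h [::] x (Hsz x Hx).
    by rewrite cat0s (labeq x x) // ?hd_refl // Hsz.
exists T; split.
  rewrite -Hs; apply: perm_size; apply: uniq_perm => //; first exact: undup_uniq.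
split; first by rewrite height_build.
move=> N _ w _ iw Hstr sigma [Hinj [Hin Hsurj]] M HM.
have Hx : sigma iw \in cs by rewrite -Hnames.
apply: (@robust_core N w iw sigma lab (sigma iw) h k Hstr) => //.
- by move=> i Hi; apply: Hinj.
- by apply: Hsz.
- by move=> p Hp Hk; apply: labeq.
- by rewrite /= take0 add0n.
Qed.

Lemma expn_pow a b : expn a b = Nat.pow a b.
Proof. elim: b => // b IH; rewrite expnS IH. by []. Qed.

Open Scope R_scope.

Lemma ceilR_ge y : y <= IZR (ceilR y).
Proof.
rewrite /ceilR opp_IZR minus_IZR.
have [_ H] := archimed (- y). lra.
Qed.

Lemma ceilR_int y (z : Z) : IZR z - 1 < y -> IZR z <= IZR (ceilR y).
Proof.
move=> H; have H1 := ceilR_ge y.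
have H2 : (z - 1 < ceilR y)%Z by apply: lt_IZR; rewrite minus_IZR; lra.
apply: IZR_le; lia.
Qed.

Lemma log2_bounds (n : nat) : (1 <= n)%nat ->
  INR (up_log 2 n) - 1 < log2 (INR n) /\ INR (up_log 2 n - 1) <= log2 (INR n).
Proof.
move=> Hn.
have ln2 := ln_lt_2.
case: (ltnP 1 n) => Hn1.
- have L0 : (0 < up_log 2 n)%nat by rewrite up_log_gt0 Hn1.
  have H := up_log_gtn (isT : (1 < 2)%nat) Hn1.
  rewrite -subn1 in H.
  have HR : INR (Nat.pow 2 (up_log 2 n - 1)) < INR n.
    by apply: lt_INR; rewrite -expn_pow; apply/ltP.
  rewrite pow_INR in HR.
  have Hl := ln_increasing _ _ (pow_lt 2 (up_log 2 n - 1) ltac:(lra)) HR.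
  rewrite ln_pow /= in Hl; last lra.
  have E : INR (up_log 2 n - 1) = INR (up_log 2 n) - 1.
    rewrite minus_INR /=; first by [].
    by apply/leP.
  have Hdiv : INR (up_log 2 n - 1) < log2 (INR n).
    rewrite /log2; apply: (Rmult_lt_reg_r (ln 2)); first lra.
    rewrite /Rdiv Rmult_assoc Rinv_l; lra.
  split; lra.
- have -> : n = 1%nat by apply/eqP; rewrite eqn_leq Hn1 Hn.
  rewrite up_log1 /log2 /= ln_1 /Rdiv Rmult_0_l; lra.
Qed.

Lemma real_part eps (n m D : nat) : 0 < eps -> 1 <= eps * INR D -> (1 <= n)%nat ->
  (m * D <= up_log 2 n - 1)%nat ->
  INR (up_log 2 n + m) <= IZR (ceilR ((1 + eps) * log2 (INR n))).
Proof.
move=> He HD Hn HmD.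
have [H1 H2] := @log2_bounds n Hn.
set L := up_log 2 n in H1 H2 HmD *.
have Hm : INR m * INR D <= INR (L - 1).
  rewrite -mult_INR; apply: le_INR; by apply/leP.
have Hm0 := pos_INR m.
have HL0 := pos_INR (L - 1).
have Hm1 : INR m <= eps * log2 (INR n) by nra.
rewrite INR_IZR_INZ; apply: ceilR_int.
rewrite -INR_IZR_INZ plus_INR; nra.
Qed.

Theorem corollary14 :
  exists g : R -> R, (forall x, 0 < x -> 0 < g x) /\
  forall eps : R, 0 < eps ->
  forall n k : nat, (1 <= n)%nat ->
  exists T : ttree,
    size (names T) = n /\
    INR (height T) <= IZR (ceilR ((1 + eps) * log2 (INR n))) + g (/ eps) * INR k /\
    robust n k T.
Proof.
exists (fun x => INR (8 * Z.to_nat (up x) + 15)); split.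
  by move=> x _; apply: lt_0_INR; lia.
move=> eps He n k Hn.
set D := Z.to_nat (up (/ eps)).
have [Hup _] := archimed (/ eps).
have Hinv : 0 < / eps by apply: Rinv_0_lt_compat.
have Hz : (0 < up (/ eps))%Z by apply: lt_IZR; lra.
have HDR : INR D = IZR (up (/ eps)) by rewrite /D INR_IZR_INZ Z2Nat.id //; lia.
have D0 : (0 < D)%nat by rewrite /D; lia.
have HD : 1 <= eps * INR D.
  rewrite HDR -(Rinv_r eps); last lra.
  apply: Rmult_le_compat_l; lra.
have [T [Hs [Hh Hr]]] := @main_nat D n k D0 Hn.
exists T; split => //; split => //.
rewrite Hh plus_INR mult_INR.
have := @real_part eps n ((up_log 2 n - 1) %/ D) D He HD Hn (leq_divM _ _).
lra.
Qed.
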